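(* There exist vectors $\{\phi_i\}_{i=1}^5$ in $\mathbb R^3$ which do phase retrieval, but such that the hyperplanes $\{\phi_i^\perp\}_{i=1}^5$ do not do norm retrieval.
   Context: A family of vectors $\{\phi_i\}$ in $\mathbb R^d$ does phase retrieval if $|\langle x,\phi_i\rangle|=|\langle y,\phi_i\rangle|$ for all $i$ implies $x=\pm y$. A family of subspaces $\{W_i\}$ with orthogonal projections $P_i$ does norm retrieval if $\|P_ix\|=\|P_iy\|$ for all $i$ implies $\|x\|=\|y\|$. Here $\phi_i^\perp=\{x\in\mathbb R^3:\langle x,\phi_i\rangle=0\}$. *)

(* Defs.v *)
From HB Require Import structures.
From mathcomp Require Import all_boot all_order all_algebra.
From mathcomp Require Import reals.
Set Implicit Arguments. Unset Strict Implicit. Unset Printing Implicit Defensive.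
Import Order.TTheory GRing.Theory Num.Theory.
Local Open Scope ring_scope.

Definition dotv (R : realType) (d : nat) (u v : 'rV[R]_d) : R :=
  \sum_(k < d) u 0 k * v 0 k.

Definition normv (R : realType) (d : nat) (u : 'rV[R]_d) : R :=
  Num.sqrt (dotv u u).

Definition phase_retrieval (R : realType) (d m : nat) (phi : 'I_m -> 'rV[R]_d) : Prop :=
  forall x y : 'rV[R]_d,
    (forall i, `|dotv x (phi i)| = `|dotv y (phi i)|) -> x = y \/ x = - y.

Definition perp (R : realType) (d : nat) (phi : 'rV[R]_d) : 'rV[R]_d -> Prop :=
  fun x => dotv x phi = 0.

Definition is_orth_proj (R : realType) (d : nat) (W : 'rV[R]_d -> Prop)
    (P : 'rV[R]_d -> 'rV[R]_d) : Prop :=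
  forall x, W (P x) /\ (forall w, W w -> dotv (x - P x) w = 0).

Definition norm_retrieval (R : realType) (d m : nat) (W : 'I_m -> 'rV[R]_d -> Prop) : Prop :=
  forall P : 'I_m -> 'rV[R]_d -> 'rV[R]_d,
    (forall i, is_orth_proj (W i) (P i)) ->
    forall x y : 'rV[R]_d,
      (forall i, normv (P i x) = normv (P i y)) -> normv x = normv y.

(* Main.v *)
Require Import Defs.
From HB Require Import structures.
From mathcomp Require Import all_boot all_order all_algebra.
From mathcomp Require Import reals.
From mathcomp Require Import ring lra.
Import GRing.Theory Num.Theory.
Local Open Scope ring_scope.

Definition mkv (R : realType) (a b c : R) : 'rV[R]_3 :=
  \row_(k < 3) [:: a; b; c]`_k.

Arguments mkv {R}.
Definition i0 : 'I_3 := @Ordinal 3 0 isT.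
Definition i1 : 'I_3 := @Ordinal 3 1 isT.
Definition i2 : 'I_3 := @Ordinal 3 2 isT.

Lemma dot3 (R : realType) (u v : 'rV[R]_3) :
  dotv u v = u 0 i0 * v 0 i0 + u 0 i1 * v 0 i1 + u 0 i2 * v 0 i2.
Proof.
rewrite /dotv !big_ord_recr big_ord0 /= add0r.
have -> : (widen_ord (leqnSn 2) (widen_ord (leqnSn 1) ord_max)) = i0 by apply/val_inj.
have -> : (widen_ord (leqnSn 2) ord_max) = i1 by apply/val_inj.
have -> : (@ord_max 2) = i2 by apply/val_inj.
by [].
Qed.

Lemma mkvE (R : realType) (a b c : R) :
  [/\ mkv a b c 0 i0 = a, mkv a b c 0 i1 = b & mkv a b c 0 i2 = c].
Proof. by rewrite !mxE. Qed.

Lemma rv3_eq (R : realType) (u v : 'rV[R]_3) :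
  u 0 i0 = v 0 i0 -> u 0 i1 = v 0 i1 -> u 0 i2 = v 0 i2 -> u = v.
Proof.
move=> h0 h1 h2; apply/rowP => k.
case: k => [[|[|[|m]]] Hk].
- have -> : Ordinal Hk = i0 by apply/val_inj.
  exact: h0.
- have -> : Ordinal Hk = i1 by apply/val_inj.
  exact: h1.
- have -> : Ordinal Hk = i2 by apply/val_inj.
  exact: h2.
- exfalso; move: (Hk); by rewrite !ltnS ltn0.
Qed.


Lemma abs_eq (R : realType) (a b : R) : `|a| = `|b| -> a = b \/ a = - b.
Proof.
move=> H.
have h : a ^+ 2 = b ^+ 2.
  by rewrite -(real_normK (num_real a)) -(real_normK (num_real b)) H.
have /orP [/eqP e | /eqP e] : (a == b) || (a == - b) by rewrite -eqf_sqr h.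
- by left.
- by right.
Qed.

Lemma proj_ok (R : realType) (p : 'rV[R]_3) : dotv p p != 0 ->
  is_orth_proj (perp p) (fun x => x - (dotv x p / dotv p p) *: p).
Proof.
move=> hp x; split.
- rewrite /perp.
  have -> : dotv (x - (dotv x p / dotv p p) *: p) p =
            dotv x p - (dotv x p / dotv p p) * dotv p p.
    by rewrite !dot3 !mxE; ring.
  by rewrite divfK // subrr.
- move=> w; rewrite /perp => hw.
  have -> : dotv (x - (x - (dotv x p / dotv p p) *: p)) w =
            (dotv x p / dotv p p) * dotv w p.
    by rewrite !dot3 !mxE; ring.
  by rewrite hw mulr0.
Qed.

Definition phi5 (R : realType) : 'I_5 -> 'rV[R]_3 := fun i =>
  [:: mkv 2 1 0; mkv 2 (-1) 0; mkv 4 1 2; mkv 4 (-1) 2; mkv 4 1 (-2)]`_i.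

Lemma phi5_nz (R : realType) i : dotv (phi5 R i) (phi5 R i) != 0.
Proof.
apply: lt0r_neq0.
case: i => [[|[|[|[|[|m]]]]] Hi]; rewrite /phi5 /= ?dot3 /mkv ?mxE /=; try lra.
exfalso; move: (Hi); by rewrite !ltnS ltn0.
Qed.

Lemma phase5 (R : realType) : phase_retrieval (phi5 R).
Proof.
move=> x y H.
have H0 := @abs_eq R _ _ (H (@Ordinal 5 0 isT)).
have H1 := @abs_eq R _ _ (H (@Ordinal 5 1 isT)).
have H2 := @abs_eq R _ _ (H (@Ordinal 5 2 isT)).
have H3 := @abs_eq R _ _ (H (@Ordinal 5 3 isT)).
have H4 := @abs_eq R _ _ (H (@Ordinal 5 4 isT)).
clear H.
rewrite /phi5 /= !dot3 /mkv !mxE /= in H0 H1 H2 H3 H4.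
case: H0 => H0; case: H1 => H1; case: H2 => H2; case: H3 => H3; case: H4 => H4;
  first [ left; apply: rv3_eq; lra
        | right; apply: rv3_eq; rewrite !mxE; lra ].
Qed.

Theorem mainTheorem5 (R : realType) :
  exists phi : 'I_5 -> 'rV[R]_3,
    phase_retrieval phi /\ ~ norm_retrieval (fun i => perp (phi i)).
Proof.
exists (phi5 R); split; first exact: phase5.
move=> H.
have := H (fun i x => x - (dotv x (phi5 R i) / dotv (phi5 R i) (phi5 R i)) *: phi5 R i)
  (fun i => @proj_ok R _ (@phi5_nz R i)) (mkv 2 0 0) (mkv 0 1 0).
have key : forall i : 'I_5,
  normv (mkv 2 0 0 - (dotv (mkv 2 0 0) (phi5 R i) / dotv (phi5 R i) (phi5 R i)) *: phi5 R i) =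
  normv (mkv 0 1 0 - (dotv (mkv 0 1 0) (phi5 R i) / dotv (phi5 R i) (phi5 R i)) *: phi5 R i).
  move=> i; rewrite /normv; congr Num.sqrt.
  case: i => [[|[|[|[|[|m]]]]] Hi]; rewrite /phi5 /= ?dot3 /mkv ?mxE /=; try (field; first [done | apply: lt0r_neq0; lra]).
  exfalso; move: (Hi); by rewrite !ltnS ltn0.
move=> /(_ key); rewrite /normv !dot3 /mkv !mxE /= => e.
have := congr1 (fun t => t ^+ 2) e; rewrite /= !sqr_sqrtr; lra.
Qed.
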